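(* Let $\boldsymbol{M}$ be a log-convex sequence. Then: (i) $\boldsymbol{M}_{+1}\subset\widetilde{\boldsymbol{M}}$. (ii) The following statements are equivalent: (1) $\boldsymbol{M}$ satisfies $\operatorname{(sm)}$; (2) $\boldsymbol{M}_{+1}$ satisfies $\operatorname{(sm)}$; (3) $\boldsymbol{M}_{+1}\approx\widetilde{\boldsymbol{M}}$; (4) $\widetilde{\boldsymbol{M}}$ satisfies $\operatorname{(sm)}$.
   Context: $\boldsymbol{M}=(M_p)_{p\in\mathbb{N}_0}$ is a sequence of positive reals with $M_0=1$, with quotients $m_p=M_{p+1}/M_p$; log-convex means $M_p^2\le M_{p-1}M_{p+1}$ for $p\ge1$ (equivalently $(m_p)$ nondecreasing). $\boldsymbol{M}_{+1}=(M_{p+1})_p$ and $\widetilde{\boldsymbol{M}}=(\widetilde M_p)_p$ with $\widetilde M_p=M_{p+1}\log(e^2m_{p+1}/m_p)$. For any sequence $\boldsymbol{N}$ with quotients $n_p=N_{p+1}/N_p$, $\operatorname{(sm)}$ means there are $C_0>0$, $H>1$ with $\log(n_{p+1}/n_p)\le C_0H^{p+1}$ for all $p\in\mathbb{N}_0$. $\boldsymbol{N}\subset\boldsymbol{P}$ means there are $C,h>0$ with $N_p\le Ch^pP_p$ for all $p$; $\boldsymbol{N}\approx\boldsymbol{P}$ means $\boldsymbol{N}\subset\boldsymbol{P}$ and $\boldsymbol{P}\subset\boldsymbol{N}$. *)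

(* Defs.v *)
From Stdlib Require Import Reals.
Open Scope R_scope.

Definition quot (M : nat -> R) (p : nat) : R := M (S p) / M p.

Definition is_weight_seq (M : nat -> R) : Prop :=
  M 0%nat = 1 /\ forall p, 0 < M p.

Definition log_convex (M : nat -> R) : Prop :=
  forall p : nat, (1 <= p)%nat -> (M p)^2 <= M (p - 1)%nat * M (S p).

Definition shift1 (M : nat -> R) : nat -> R := fun p => M (S p).

Definition Mtilde (M : nat -> R) : nat -> R :=
  fun p => M (S p) * ln (exp 2 * quot M (S p) / quot M p).

Definition sm (N : nat -> R) : Prop :=
  exists C0 H : R, 0 < C0 /\ 1 < H /\
    forall p : nat, ln (quot N (S p) / quot N p) <= C0 * H ^ (S p).

Definition seq_incl (N P : nat -> R) : Prop :=
  exists C h : R, 0 < C /\ 0 < h /\ forall p : nat, N p <= C * h ^ p * P p.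

Definition seq_equiv (N P : nat -> R) : Prop := seq_incl N P /\ seq_incl P N.

(* Main.v *)
Require Import Defs.
From Stdlib Require Import Reals.
From Stdlib Require Import Lra Lia Psatz.
Open Scope R_scope.

Lemma ln_le' x y : 0 < x -> x <= y -> ln x <= ln y.
Proof.
  intros Hx Hxy. destruct (Rle_lt_or_eq_dec _ _ Hxy) as [H|H].
  - left; apply ln_increasing; auto.
  - subst; lra.
Qed.

Lemma ln_le_xm1 y : 0 < y -> ln y <= y - 1.
Proof.
  intros Hy. pose proof (exp_ineq1_le (ln y)). rewrite exp_ln in H; lra.
Qed.

Definition bb (M : nat -> R) p := ln (quot M (S p) / quot M p).

Section S.
Variable M : nat -> R.
Hypothesis Hw : is_weight_seq M.
Hypothesis Hl : log_convex M.

Lemma Mpos p : 0 < M p.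
Proof. apply (proj2 Hw). Qed.

Lemma qpos p : 0 < quot M p.
Proof. unfold quot. pose proof (Mpos p); pose proof (Mpos (S p)).
  apply Rdiv_lt_0_compat; auto. Qed.

Lemma rge1 p : 1 <= quot M (S p) / quot M p.
Proof.
  pose proof (Hl (S p) ltac:(lia)) as H. simpl (S p - 1)%nat in H.
  rewrite Nat.sub_0_r in H.
  pose proof (Mpos p); pose proof (Mpos (S p)); pose proof (Mpos (S (S p))).
  unfold quot. apply (Rmult_le_reg_r (M (S p) / M p)).
  { apply Rdiv_lt_0_compat; auto. }
  replace (M (S (S p)) / M (S p) / (M (S p) / M p) * (M (S p) / M p))
    with (M (S (S p)) / M (S p)) by (field; lra).
  apply (Rmult_le_reg_r (M (S p) * M p)). nra.
  replace (M (S (S p)) / M (S p) * (M (S p) * M p)) with (M p * M (S (S p))) by (field; lra).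
  replace (1 * (M (S p) / M p) * (M (S p) * M p)) with (M (S p) ^ 2) by (field; lra).
  lra.
Qed.

Lemma b_nonneg p : 0 <= bb M p.
Proof. unfold bb. rewrite <- ln_1. apply ln_le'. lra. apply rge1. Qed.

Lemma a_pos p : 0 < 2 + bb M p.
Proof. pose proof (b_nonneg p); lra. Qed.

Lemma lna_nonneg p : 0 <= ln (2 + bb M p).
Proof. rewrite <- ln_1. apply ln_le'. lra. pose proof (b_nonneg p); lra. Qed.

Lemma Mt_eq p : Mtilde M p = M (S p) * (2 + bb M p).
Proof.
  unfold Mtilde, bb. f_equal.
  pose proof (qpos p); pose proof (qpos (S p)).
  replace (exp 2 * quot M (S p) / quot M p) with (exp 2 * (quot M (S p) / quot M p))
    by (field; lra).
  rewrite ln_mult, ln_exp. reflexivity. apply exp_pos.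
  apply Rdiv_lt_0_compat; auto.
Qed.

Lemma Mt_ratio p :
  ln (quot (Mtilde M) (S p) / quot (Mtilde M) p) =
  bb M (S p) + ln (2 + bb M (S (S p))) + - (2 * ln (2 + bb M (S p))) + ln (2 + bb M p).
Proof.
  unfold quot at 1 2. rewrite !Mt_eq.
  pose proof (a_pos p); pose proof (a_pos (S p)); pose proof (a_pos (S (S p))).
  pose proof (Mpos (S p)); pose proof (Mpos (S (S p))); pose proof (Mpos (S (S (S p)))).
  pose proof (qpos (S p)); pose proof (qpos (S (S p))).
  set (a0 := 2 + bb M p) in *. set (a1 := 2 + bb M (S p)) in *.
  set (a2 := 2 + bb M (S (S p))) in *.
  assert (E : M (S (S (S p))) * a2 / (M (S (S p)) * a1) / (M (S (S p)) * a1 / (M (S p) * a0))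
    = (quot M (S (S p)) / quot M (S p)) * a2 * a0 * / (a1 * a1)).
  { unfold quot. field. repeat split; lra. }
  rewrite E. unfold bb.
  assert (0 < quot M (S (S p)) / quot M (S p)) by (apply Rdiv_lt_0_compat; auto).
  rewrite !ln_mult, ln_Rinv, ln_mult; try lra.
  all: try apply Rmult_lt_0_compat; try apply Rinv_0_lt_compat; try apply Rmult_lt_0_compat; auto.
  all: try apply Rmult_lt_0_compat; auto.
  all: try apply Rinv_0_lt_compat; auto.
Qed.

Definition S1 := exists C0 H : R, 0 < C0 /\ 1 < H /\ forall p, bb M p <= C0 * H ^ S p.
Definition S2 := exists C0 H : R, 0 < C0 /\ 1 < H /\ forall p, bb M (S p) <= C0 * H ^ S p.

Lemma powge1 H n : 1 < H -> 1 <= H ^ n.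
Proof. intros. replace 1 with (H ^ 0) by (simpl; ring). apply Rle_pow; [lra|lia]. Qed.

Lemma S1S2 : S1 -> S2.
Proof.
  intros [C0 [H [HC [HH Hb]]]]. exists (C0 * H), H. split; [nra|split; auto].
  intros p. replace (C0 * H * H ^ S p) with (C0 * H ^ S (S p)) by (simpl; ring). apply Hb.
Qed.

Lemma S2S1 : S2 -> S1.
Proof.
  intros [C0 [H [HC [HH Hb]]]]. pose proof (b_nonneg 0).
  exists (C0 + bb M 0), H. split; [lra|split; auto].
  intros [|p].
  - simpl. nra.
  - pose proof (Hb p). pose proof (powge1 H (S p) HH).
    replace (H ^ S (S p)) with (H * H ^ S p) by (simpl; ring).
    assert (0 <= bb M 0 * H ^ S p) by (apply Rmult_le_pos; lra).
    assert (C0 * H ^ S p <= C0 * (H * H ^ S p)) by (apply Rmult_le_compat_l; nra).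
    nra.
Qed.

Lemma S1S3 : S1 -> seq_incl (Mtilde M) (shift1 M).
Proof.
  intros [C0 [H [HC [HH Hb]]]]. exists (2 + C0 * H), H.
  split; [nra|split; [lra|]]. intros p. rewrite Mt_eq. unfold shift1.
  pose proof (Hb p). pose proof (powge1 H p HH). pose proof (Mpos (S p)).
  replace (H ^ S p) with (H * H ^ p) in H0 by (simpl; ring).
  rewrite Rmult_comm. apply Rmult_le_compat_r. lra. nra.
Qed.

Lemma S3S1 : seq_incl (Mtilde M) (shift1 M) -> S1.
Proof.
  intros [C [h [HC [Hh Hb]]]]. exists C, (h + 1). split; auto. split; [lra|].
  intros p. pose proof (Hb p) as Hp. rewrite Mt_eq in Hp. unfold shift1 in Hp.
  pose proof (Mpos (S p)). pose proof (b_nonneg p).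
  assert (2 + bb M p <= C * h ^ p).
  { apply (Rmult_le_reg_l (M (S p))); auto. nra. }
  assert (h ^ p <= (h+1) ^ p) by (apply pow_incr; lra).
  assert ((h+1)^p <= (h+1)^S p) by (apply Rle_pow; [lra|lia]).
  nra.
Qed.

Lemma S1S4 : S1 -> sm (Mtilde M).
Proof.
  intros [C0 [H [HC [HH Hb]]]]. exists (2 + 3 * C0 * H * H), H.
  split; [nra|split; auto]. intros p. rewrite Mt_ratio.
  pose proof (lna_nonneg (S p)).
  pose proof (ln_le_xm1 _ (a_pos p)). pose proof (ln_le_xm1 _ (a_pos (S (S p)))).
  pose proof (Hb p); pose proof (Hb (S p)); pose proof (Hb (S (S p))).
  pose proof (powge1 H (S p) HH).
  set (X := H ^ S p) in *.
  replace (H ^ S (S p)) with (H * X) in * by (unfold X; simpl; ring).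
  replace (H ^ S (S (S p))) with (H * (H * X)) in * by (unfold X; simpl; ring).
  clearbody X.
  assert (X <= H * X) by (pose proof (Rmult_le_compat_r X 1 H); lra).
  assert (H * X <= H * (H * X)) by (apply Rmult_le_compat_l; lra).
  assert (C0 * X <= C0 * (H * X)) by (apply Rmult_le_compat_l; lra).
  assert (C0 * (H * X) <= C0 * (H * (H * X))) by (apply Rmult_le_compat_l; lra).
  nra.
Qed.

Lemma S4S2 : sm (Mtilde M) -> S2.
Proof.
  intros [C0 [H [HC [HH Hb]]]].
  assert (L4 : 0 <= ln 4) by (rewrite <- ln_1; apply ln_le'; lra).
  exists (2 * C0 + 4 * ln 4), H. split; [lra|split; auto]. intros p.
  pose proof (Hb p) as Hp. rewrite Mt_ratio in Hp.
  pose proof (lna_nonneg p); pose proof (lna_nonneg (S (S p))).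
  pose proof (a_pos (S p)).
  assert (Hq : ln ((2 + bb M (S p)) * / 4) <= (2 + bb M (S p)) * / 4 - 1)
    by (apply ln_le_xm1; apply Rmult_lt_0_compat; lra).
  rewrite ln_mult, ln_Rinv in Hq; try lra.
  pose proof (powge1 H (S p) HH). nra.
Qed.

End S.

Theorem proposition4p14 (M : nat -> R) :
  is_weight_seq M -> log_convex M ->
  seq_incl (shift1 M) (Mtilde M) /\
  ((sm M <-> sm (shift1 M)) /\
   (sm (shift1 M) <-> seq_equiv (shift1 M) (Mtilde M)) /\
   (seq_equiv (shift1 M) (Mtilde M) <-> sm (Mtilde M))).
Proof.
  intros Hw Hl.
  assert (Hi : seq_incl (shift1 M) (Mtilde M)).
  { exists 1, 1. split; [lra|split; [lra|]]. intros p. rewrite Mt_eq by auto.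
    unfold shift1. rewrite pow1. pose proof (Mpos M Hw (S p)).
    pose proof (b_nonneg M Hw Hl p). nra. }
  assert (E1 : sm M <-> S1 M) by (unfold sm, S1, bb; tauto).
  assert (E2 : sm (shift1 M) <-> S2 M) by (unfold sm, S2, bb; tauto).
  pose proof (S1S2 M). pose proof (S2S1 M Hw Hl).
  pose proof (S1S3 M Hw). pose proof (S3S1 M Hw Hl).
  pose proof (S1S4 M Hw Hl). pose proof (S4S2 M Hw Hl).
  unfold seq_equiv. split; auto. tauto.
Qed.
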